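(* Let $R$ be a noncommutative division algebra over a field $F$, and let $p\in F[x]$ be a nonconstant polynomial. Then there exist elements $\alpha,\beta\in R$ such that $p(\alpha\beta)\neq p(\beta\alpha)$. *)

(* Defs.v *)
From HB Require Import structures.
From mathcomp Require Import all_boot all_order all_algebra.
Set Implicit Arguments.
Unset Strict Implicit.
Unset Printing Implicit Defensive.
Import GRing.Theory.
Local Open Scope ring_scope.

Definition division_algebra (F : fieldType) (R : unitAlgType F) : Prop :=
  forall x : R, x != 0 -> x \is a GRing.unit.

(* Main.v *)
Require Import Defs.
From HB Require Import structures.
From mathcomp Require Import all_boot all_order all_algebra.
From mathcomp Require Import all_field.
From mathcomp Require Import zify.
From Stdlib Require Import Classical.
Import GRing.Theory.
Local Open Scope ring_scope.

Set Implicit Arguments. Unset Strict Implicit. Unset Printing Implicit Defensive.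

Lemma finite_collect (T : eqType) (P : T -> Prop) (B : nat) :
  (forall s : seq T, uniq s -> (forall x, x \in s -> P x) -> (size s <= B)%N) ->
  exists s : seq T, uniq s /\ (forall x, P x <-> x \in s).
Proof.
move=> hB.
suff H : forall f (s : seq T), uniq s -> (forall x, x \in s -> P x) -> (B - size s <= f)%N ->
  exists s : seq T, uniq s /\ (forall x, P x <-> x \in s).
  by apply: (H B [::]) => //; rewrite subn0.
elim=> [|f IH] s us hs hf.
  exists s; split => // x; split => [Px|]; last exact: hs.
  apply: NNPP => /negP nx.
  have := hB (x :: s); rewrite /= nx us => /(_ isT).
  have h : forall y, y \in x :: s -> P y by move=> y; rewrite in_cons => /orP[/eqP->|/hs].
  move=> /(_ h); move: hf; lia.
case: (classic (forall x, P x -> x \in s)) => [hall|].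
  by exists s; split => // x; split => [/hall|/hs].
move=> hn; have [x hx] := not_all_ex_not _ _ hn; have [Px nx] := imply_to_and _ _ hx.
apply: (IH (x :: s)) => /=.
- by rewrite us andbT; apply/negP.
- by move=> y; rewrite in_cons => /orP[/eqP->|/hs].
- have h : forall y, y \in x :: s -> P y by move=> y; rewrite in_cons => /orP[/eqP->|/hs].
  have := hB (x :: s) _ h; rewrite /= us andbT => /(_ (introT negP nx)).
  move: hf; lia.
Qed.

Section RingLemmas.
Variable R : unitRingType.
Hypothesis hdiv : forall x : R, x != 0 -> x \is a GRing.unit.

Lemma uniq_roots_comm (s : seq R) :
  uniq s -> (forall x y, x \in s -> y \in s -> x * y = y * x) -> uniq_roots s.
Proof.
elim: s => //= x s IH /andP[nx us] hc.
rewrite IH ?andbT //; last by move=> u v hu hv; apply: hc; rewrite in_cons ?hu ?hv orbT.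
apply/allP => y ys; rewrite /diff_roots.
have -> : x * y = y * x by apply: hc; rewrite in_cons ?eqxx ?ys ?orbT.
rewrite eqxx /=; apply: hdiv; rewrite subr_eq0; apply: contraNneq nx => <-; done.
Qed.

Lemma poly_roots_zero (Q : {poly R}) (s : seq R) :
  uniq s -> (forall x y, x \in s -> y \in s -> x * y = y * x) ->
  (size Q <= size s)%N -> (forall z, z \in s -> Q.[z] = 0) -> Q = 0.
Proof.
move=> us hc hs hr; apply/eqP; apply: contraTT hs => nQ; rewrite -ltnNge.
apply: max_ring_poly_roots => //; last exact: uniq_roots_comm.
by apply/allP => z zs; rewrite /root hr.
Qed.

End RingLemmas.

Lemma count_partition (T U : eqType) (f : T -> U) (zs : seq U) (L : seq T) :
  uniq zs -> (forall x, x \in L -> f x \in zs) ->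
  size L = (\sum_(z <- zs) count (fun x => f x == z) L)%N.
Proof.
move=> uz; elim: L => [|x L IH] hL /=; first by rewrite big1.
rewrite big_split /= -IH; last by move=> y yL; apply: hL; rewrite in_cons yL orbT.
rewrite addnC -addn1; congr (_ + _).
have h1 := count_uniq_mem (f x) uz; rewrite hL ?in_cons ?eqxx // in h1.
transitivity (count_mem (f x) zs); first by rewrite h1.
rewrite -sum1_count big_mkcond /=; apply: eq_bigr => z _; rewrite eq_sym; by case: (_ == _).
Qed.


Section Delta.
Variable R : nzRingType.
Variable a : R.
Definition delta (y : R) := a * y - y * a.

Lemma iter_delta n y : iter n delta y =
  \sum_(i < n.+1) ((-1) ^+ i * (a ^+ (n - i) * y * a ^+ i)) *+ 'C(n, i).
Proof.
elim: n => [|n IHn]; first by rewrite big_ord_recl big_ord0 /= !expr0 !mul1r mulr1 addr0.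
rewrite iterS IHn /delta big_distrr big_distrl /=.
pose X (i : nat) := ((-1) ^+ i.+1 * (a ^+ (n - i) * y * a ^+ i.+1)) *+ 'C(n, i.+1).
pose B (i : nat) := ((-1) ^+ i * (a ^+ (n - i) * y * a ^+ i.+1)) *+ 'C(n, i).
have eA : \sum_(i < n.+1) a * ((-1) ^+ i * (a ^+ (n - i) * y * a ^+ i) *+ 'C(n, i))
    = a ^+ n.+1 * y + \sum_(i < n) X i.
  rewrite big_ord_recl /= !expr0 mul1r mulr1 subn0 bin0 mulr1n mulrA -exprS; congr (_ + _).
  apply: eq_bigr => i _; rewrite /X /bump /= add1n.
  rewrite mulrnAr; congr (_ *+ _).
  rewrite mulrA (commrX _ (commrN1 a)) -(mulrA ((-1) ^+ _)); congr (_ * _).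
  by rewrite !mulrA -exprS subnSK.
have eB : \sum_(i < n.+1) (-1) ^+ i * (a ^+ (n - i) * y * a ^+ i) *+ 'C(n, i) * a
    = \sum_(i < n.+1) B i.
  apply: eq_bigr => i _; rewrite /B mulrnAl; congr (_ *+ _).
  by rewrite -!mulrA -exprSr.
have eT : \sum_(i < n.+2) (-1) ^+ i * (a ^+ (n.+1 - i) * y * a ^+ i) *+ 'C(n.+1, i)
    = a ^+ n.+1 * y + \sum_(i < n.+1) (X i - B i).
  rewrite big_ord_recl /= !expr0 mul1r mulr1 subn0 bin0 mulr1n; congr (_ + _).
  apply: eq_bigr => i _; rewrite /X /B /bump /= add1n binS mulrnDr subSS; congr (_ + _).
  by rewrite exprS mulN1r mulNr mulNrn.
rewrite eA eB eT big_split /= sumrN addrA; congr (_ + _ - _).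
rewrite big_ord_recr /= /X bin_small // mulr0n addr0 //.
Qed.

End Delta.

Section StepC.
Variable R : unitRingType.
Hypothesis hdiv : forall x : R, x != 0 -> x \is a GRing.unit.

Lemma chain_delta (a : R) n y : delta a y != 0 -> iter n (delta a) (delta a y) = 0 ->
  exists u, delta a u != 0 /\ delta a (delta a u) = 0.
Proof.
elim: n y => [|n IH] y hy /=; first by move=> h; rewrite h eqxx in hy.
case: (eqVneq (delta a (delta a y)) 0) => h; first by exists y.
by move=> h'; apply: (IH (delta a y)) => //; rewrite -iterSr.
Qed.

Lemma stepC m : (0 < m)%N -> (forall j, (0 < j < m)%N -> 'C(m, j)%:R = 0 :> R) ->
  (forall x y : R, x ^+ m * y = y * x ^+ m) -> forall x y : R, x * y = y * x.
Proof.
case: m => // m _ hb hc.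
have frob : forall u v : R, GRing.comm u v -> (u + v) ^+ m.+1 = u ^+ m.+1 + v ^+ m.+1.
  move=> u v huv; rewrite exprDn_comm // big_ord_recl big_ord_recr /=.
  rewrite subn0 bin0 mulr1n expr0 mulr1 subnn binn mulr1n expr0 mul1r.
  rewrite big1 ?add0r // => i _; rewrite -mulr_natr hb ?mulr0 //.
  by case: i => i hi; rewrite /bump /=; lia.
have negm : (-1) ^+ m.+1 = -1 :> R.
  have := frob 1 (-1) (commrN1 1); rewrite subrr expr0n /= expr1n => /eqP.
  by rewrite eq_sym addrC addr_eq0 => /eqP.
have deltam : forall a y : R, iter m.+1 (delta a) y = 0.
  move=> a y; rewrite iter_delta big_ord_recl big_ord_recr /=.
  have -> : bump 0 m = m.+1 by rewrite /bump add1n.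
  rewrite subn0 bin0 mulr1n !expr0 mulr1 mul1r subnn binn mulr1n expr0 mul1r negm.
  rewrite big1 ?add0r; last first.
    move=> i _; rewrite -mulr_natr hb ?mulr0 //.
    by case: i => i hi; rewrite /bump /=; lia.
  by rewrite mulN1r hc subrr.
move=> a y; apply/eqP; apply/negPn/negP => hne.
have hd : delta a y != 0 by rewrite /delta subr_eq0.
have h0 : iter m (delta a) (delta a y) = 0 by rewrite -iterSr deltam.
have [u [hu hu2]] := chain_delta hd h0.
set w := delta a u in hu hu2.
have caw : a * w = w * a by apply/eqP; rewrite -subr_eq0; apply/eqP; exact: hu2.
have uw := hdiv hu.
have caw' : a * w^-1 = w^-1 * a by apply: commrV.
pose v := w^-1 * u.
have dv : a * v - v * a = 1.
  rewrite /v mulrA caw' -mulrA -mulrA -mulrBr.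
  by rewrite -/(delta a u) -/w mulVr.
pose b := v * a.
have ab : a * b = (b + 1) * a.
  have av : a * v = v * a + 1 by rewrite -dv addrC subrK.
  by rewrite /b mulrA av.
have abn : forall n, a * b ^+ n = (b + 1) ^+ n * a.
  elim=> [|n IH]; first by rewrite !expr0 mul1r mulr1.
  by rewrite exprS mulrA ab -mulrA IH mulrA -exprS.
have := abn m.+1; rewrite frob; last exact: commr1.
rewrite expr1n mulrDl mul1r -hc => h.
have a0 : a = 0 by apply: (addrI (b ^+ m.+1 * a)); rewrite -h addr0.
by move: hd; rewrite /delta a0 mul0r mulr0 subrr eqxx.
Qed.
End StepC.


Section FinSubS.
Variable R : unitRingType.
Hypothesis hdivR : forall x : R, x != 0 -> x \is a GRing.unit.
Variable S : seq R.
Hypothesis S1 : (1 : R) \in S.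
Hypothesis SB : forall x y, x \in S -> y \in S -> x - y \in S.
Hypothesis SM : forall x y, x \in S -> y \in S -> x * y \in S.

Definition FT := let _ := (hdivR, S1, SB, SM) in seq_sub S.
HB.instance Definition _ := Finite.on FT.

Lemma S0 : (0 : R) \in S. Proof. by rewrite -(subrr 1) SB. Qed.
Lemma SN x : x \in S -> - x \in S. Proof. by move=> h; rewrite -sub0r SB // S0. Qed.
Lemma SD x y : x \in S -> y \in S -> x + y \in S.
Proof. by move=> hx hy; rewrite -[y]opprK SB ?SN. Qed.

Definition ft0 : FT := SeqSub S0.
Definition ft1 : FT := SeqSub S1.
Definition ftopp (x : FT) : FT := SeqSub (SN (ssvalP x)).
Definition ftadd (x y : FT) : FT := SeqSub (SD (ssvalP x) (ssvalP y)).
Definition ftmul (x y : FT) : FT := SeqSub (SM (ssvalP x) (ssvalP y)).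

Lemma ft_inj : injective (@ssval R S). Proof. exact: val_inj. Qed.

Fact ftaddA : associative ftadd. Proof. by move=> x y z; apply: val_inj; rewrite /= addrA. Qed.
Fact ftaddC : commutative ftadd. Proof. by move=> x y; apply: val_inj; rewrite /= addrC. Qed.
Fact ftadd0 : left_id ft0 ftadd. Proof. by move=> x; apply: val_inj; rewrite /= add0r. Qed.
Fact ftaddN : left_inverse ft0 ftopp ftadd. Proof. by move=> x; apply: val_inj; rewrite /= addNr. Qed.
HB.instance Definition _ := GRing.isZmodule.Build FT ftaddA ftaddC ftadd0 ftaddN.
Fact ftmulA : associative ftmul. Proof. by move=> x y z; apply: val_inj; rewrite /= mulrA. Qed.
Fact ftmul1 : left_id ft1 ftmul. Proof. by move=> x; apply: val_inj; rewrite /= mul1r. Qed.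
Fact ftmulr1 : right_id ft1 ftmul. Proof. by move=> x; apply: val_inj; rewrite /= mulr1. Qed.
Fact ftmulDl : left_distributive ftmul ftadd. Proof. by move=> x y z; apply: val_inj; rewrite /= mulrDl. Qed.
Fact ftmulDr : right_distributive ftmul ftadd. Proof. by move=> x y z; apply: val_inj; rewrite /= mulrDr. Qed.
Fact ft10 : ft1 != ft0. Proof. by apply/eqP => /(congr1 val) /= /eqP; rewrite oner_eq0. Qed.
HB.instance Definition _ := GRing.Zmodule_isNzRing.Build FT ftmulA ftmul1 ftmulr1 ftmulDl ftmulDr ft10.

Definition ftunit (x : FT) : bool := (val x != 0) && ((val x)^-1 \in S).
Definition ftinv (x : FT) : FT :=
  if insub (val x)^-1 is Some y then (if val x != 0 then y else x) else x.
Lemma ftinvE x : ftunit x -> val (ftinv x) = (val x)^-1.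
Proof. by case/andP=> nz hS; rewrite /ftinv insubT /= nz. Qed.
Fact ftmulV : {in ftunit, left_inverse 1 ftinv *%R}.
Proof. move=> x hx; apply: val_inj; rewrite /= ftinvE // mulVr //; apply: hdivR; by case/andP: hx. Qed.
Fact ftdivrr : {in ftunit, right_inverse 1 ftinv *%R}.
Proof. move=> x hx; apply: val_inj; rewrite /= ftinvE // mulrV //; apply: hdivR; by case/andP: hx. Qed.
Fact ftunitP : forall x y : FT, y * x = 1 /\ x * y = 1 -> ftunit x.
Proof.
move=> x y [h1 h2]; have h1' := congr1 val h1; have h2' := congr1 val h2; simpl in h1', h2'.
have ux : val x \is a GRing.unit by apply/unitrP; exists (val y).
have e : (val x)^-1 = val y by rewrite -[LHS]mulr1 -h2' mulrA mulVr ?mul1r.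
rewrite /ftunit e (ssvalP y) andbT; apply/eqP => h0; move: h2'; rewrite h0 mul0r.
by move/eqP; rewrite eq_sym oner_eq0.
Qed.
Fact ftinv_out : {in [predC ftunit], ftinv =1 id}.
Proof.
move=> x; rewrite inE /= /ftunit /ftinv negb_and negbK => /orP[/eqP h|h].
  by case: insubP => // y _ _; rewrite h eqxx.
by rewrite insubN.
Qed.
HB.instance Definition _ := GRing.NzRing_hasMulInverse.Build FT ftmulV ftdivrr ftunitP ftinv_out.

Lemma ft_dom : GRing.integral_domain_axiom FT.
Proof.
move=> x y /(congr1 val) /= /eqP h.
apply/orP; case: (eqVneq (val x) 0) => hx.
  by left; apply/eqP/val_inj.
right; apply/eqP/val_inj => /=.
by rewrite -[LHS]mul1r -(mulVr (hdivR hx)) -mulrA (eqP h) mulr0.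
Qed.

Lemma ft_comm (x y : R) : x \in S -> y \in S -> x * y = y * x.
Proof.
move=> hx hy.
have := @finDomain_mulrC FT ft_dom (SeqSub hx) (SeqSub hy).
by move/(congr1 val).
Qed.

Definition KT := FinDomainFieldType ft_dom.
End FinSubS.
Section KTval.
Variable R : unitRingType.
Hypothesis hdivR : forall x : R, x != 0 -> x \is a GRing.unit.
Variable S : seq R.
Hypothesis S1 : (1 : R) \in S.
Hypothesis SB : forall x y, x \in S -> y \in S -> x - y \in S.
Hypothesis SM : forall x y, x \in S -> y \in S -> x * y \in S.
Lemma valM (x y : KT hdivR S1 SB SM) : ssval (x * y) = ssval x * ssval y. Proof. reflexivity. Qed.
Lemma valD (x y : KT hdivR S1 SB SM) : ssval (x + y) = ssval x + ssval y. Proof. reflexivity. Qed.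
Lemma valN (x : KT hdivR S1 SB SM) : ssval (- x) = - ssval x. Proof. reflexivity. Qed.
Lemma val1 : ssval (1 : KT hdivR S1 SB SM) = 1. Proof. reflexivity. Qed.
Lemma val0 : ssval (0 : KT hdivR S1 SB SM) = 0. Proof. reflexivity. Qed.
Lemma valX (x : KT hdivR S1 SB SM) n : ssval (x ^+ n) = ssval x ^+ n.
Proof. elim: n => [|n IH]; first exact: val1. by rewrite !exprS valM IH. Qed.
End KTval.



Section EvK.
Variables (R : nzRingType) (K : fieldType) (phi : K -> R) (a : R).
Hypothesis phi0 : phi 0 = 0.
Hypothesis phi1 : phi 1 = 1.
Hypothesis phiD : forall x y, phi (x + y) = phi x + phi y.
Hypothesis phiN : forall x, phi (- x) = - phi x.
Hypothesis phiM : forall x y, phi (x * y) = phi x * phi y.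

Definition evK (P : {poly K}) (y : R) : R := \sum_(i < size P) phi P`_i * y * a ^+ i.

Lemma evK_wide n (P : {poly K}) (y : R) : (size P <= n)%N -> evK P y = \sum_(i < n) phi P`_i * y * a ^+ i.
Proof.
move=> hn; rewrite /evK (big_ord_widen n (fun i => phi P`_i * y * a ^+ i)) // big_mkcond.
apply: eq_bigr => i _; case: ifP => // /negbT; rewrite -leqNgt => hi.
by rewrite nth_default // phi0 !mul0r.
Qed.

Lemma evK_add (P Q : {poly K}) (y : R) : evK (P + Q) y = evK P y + evK Q y.
Proof.
set n := maxn (size P) (size Q).
rewrite (@evK_wide n) ?(leq_trans (size_polyD _ _)) //.
rewrite (@evK_wide n P) ?leq_maxl // (@evK_wide n Q) ?leq_maxr // -big_split /=.
by apply: eq_bigr => i _; rewrite coefD phiD !mulrDl.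
Qed.

Lemma evK_opp (P : {poly K}) (y : R) : evK (- P) y = - evK P y.
Proof.
rewrite /evK size_polyN -sumrN; apply: eq_bigr => i _.
by rewrite coefN phiN !mulNr.
Qed.

Lemma evK_C (c : K) (y : R) : evK c%:P y = phi c * y.
Proof.
rewrite (@evK_wide 1) ?size_polyC ?leq_b1 // big_ord1 coefC /= expr0 mulr1 //.
Qed.

Lemma evK_MX (P : {poly K}) (y : R) : evK (P * 'X) y = evK P y * a.
Proof.
rewrite (@evK_wide (size P).+1); last first.
  by apply: leq_trans (size_polyMleq _ _) _; rewrite size_polyX addn2.
rewrite big_ord_recl coefMX eqxx phi0 !mul0r add0r /evK big_distrl /=.
by apply: eq_bigr => i _; rewrite coefMX /bump /= add1n exprSr mulrA.
Qed.

Lemma evK_CM (c : K) (P : {poly K}) (y : R) : evK (c%:P * P) y = phi c * evK P y.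
Proof.
rewrite (@evK_wide (size P)); last first.
  by rewrite mul_polyC size_scale_leq.
rewrite /evK big_distrr /=; apply: eq_bigr => i _.
by rewrite coefCM phiM !mulrA.
Qed.

Lemma evK0 (y : R) : evK 0 y = 0. Proof. by rewrite /evK size_poly0 big_ord0. Qed.

Lemma evK_mul (P Q : {poly K}) (y : R) : evK (P * Q) y = evK P (evK Q y).
Proof.
elim/poly_ind: P => [|P c IH]; first by rewrite mul0r !evK0.
rewrite mulrDl mulrAC evK_add evK_MX IH evK_CM evK_add evK_MX evK_C //.
Qed.

Lemma evK_Xn n (y : R) : evK 'X^n y = y * a ^+ n.
Proof.
elim: n => [|n IH]; first by rewrite expr0 -polyC1 evK_C phi1 mul1r expr0 mulr1.
by rewrite exprSr evK_MX IH -mulrA -exprSr.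
Qed.

Lemma evK_XsubC (c : K) (y : R) : evK ('X - c%:P) y = y * a - phi c * y.
Proof. by rewrite evK_add evK_opp evK_C -(expr1 'X) evK_Xn expr1. Qed.

Lemma evK_chain (s : seq K) (w : R) : w != 0 ->
  evK (\prod_(x <- s) ('X - x%:P)) w = 0 ->
  exists2 mu, mu \in s & exists2 v, v != 0 & v * a = phi mu * v.
Proof.
elim: s w => [|x s IH] w hw.
  by rewrite big_nil -polyC1 evK_C phi1 mul1r => h; rewrite h eqxx in hw.
rewrite big_cons evK_mul evK_XsubC.
case: (eqVneq (evK (\prod_(x <- s) ('X - x%:P)) w) 0) => [h0 _|hn h].
  by have [mu hmu hv] := IH w hw h0; exists mu => //; rewrite in_cons hmu orbT.
exists x; first by rewrite in_cons eqxx.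
by exists (evK (\prod_(x <- s) ('X - x%:P)) w) => //; apply/eqP; rewrite -subr_eq0 h.
Qed.

End EvK.

Section Eigen.
Variables (R : nzRingType) (K : finFieldType) (phi : K -> R).
Hypothesis phi0 : phi 0 = 0.
Hypothesis phi1 : phi 1 = 1.
Hypothesis phiD : forall x y, phi (x + y) = phi x + phi y.
Hypothesis phiN : forall x, phi (- x) = - phi x.
Hypothesis phiM : forall x y, phi (x * y) = phi x * phi y.

Lemma eigen (aK : K) (b0 : R) : phi aK * b0 != b0 * phi aK ->
  exists2 mu : K, mu != aK & exists2 v, v != 0 & v * phi aK = phi mu * v.
Proof.
move=> hab; set a := phi aK.
have phiX : forall x n, phi (x ^+ n) = phi x ^+ n.
  by move=> x; elim=> [|n IH]; rewrite ?expr0 ?phi1 // !exprS phiM IH.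
have hQ : evK phi a ('X^#|K| - 'X) b0 = 0.
  rewrite evK_add // evK_opp // -(expr1 'X) !evK_Xn // expr1.
  by rewrite /a -phiX expf_card subrr.
rewrite finField_genPoly (bigD1 aK) //= mulrC evK_mul // evK_XsubC // in hQ.
rewrite -big_filter in hQ.
have hw : b0 * a - a * b0 != 0 by rewrite subr_eq0 eq_sym.
have [mu hmu [v hv hva]] := evK_chain phi0 phi1 phiD phiN phiM hw hQ.
exists mu; first by move: hmu; rewrite mem_filter => /andP[].
by exists v.
Qed.
End Eigen.


Section Cross.
Variable R : unitRingType.
Hypothesis hdiv : forall x : R, x != 0 -> x \is a GRing.unit.
Variable a : R.
Variable Kl : seq R.
Hypothesis hKl : forall k, (forall c, c * a = a * c -> k * c = c * k) <-> k \in Kl.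
Variables m v : R.
Hypothesis hm : m \in Kl.
Hypothesis hma : m != a.
Hypothesis hv : v != 0.
Hypothesis hva : v * a = m * v.
Variable N : nat.
Hypothesis hN : forall L : seq R, uniq L ->
  (forall x y, x \in L -> y \in L -> x * y = y * x) -> (size L <= N)%N.

Lemma cK0 : (0 : R) \in Kl. Proof. by apply/hKl => c _; rewrite mul0r mulr0. Qed.
Lemma cKM x y : x \in Kl -> y \in Kl -> x * y \in Kl.
Proof.
move=> /hKl hx /hKl hy; apply/hKl => c hc.
by rewrite -mulrA hy // mulrA hx // mulrA.
Qed.

Lemma uv : v \is a GRing.unit. Proof. exact: hdiv. Qed.

Lemma conj1 k : k \in Kl -> v * k * v^-1 \in Kl.
Proof.
move=> /hKl hk; apply/hKl => c hc.
have hmK := (iffRL (hKl m) hm).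
have av : a * v^-1 = v^-1 * m.
  by rewrite -[in LHS](mulKr uv a) hva mulrA mulrK ?uv.
pose c' := v^-1 * c * v.
have hcm : c * m = m * c by rewrite (hmK c hc).
have hc' : c' * a = a * c'.
  rewrite /c' -mulrA hva mulrA -(mulrA (v^-1)) hcm mulrA -av.
  by rewrite !mulrA.
have hk' : k * c' = c' * k by apply: hk.
have e : c = v * c' * v^-1 by rewrite /c' !mulrA mulrV ?uv // mul1r mulrK ?uv.
clearbody c'; rewrite e !mulrA !mulrVK ?uv //.
by rewrite -(mulrA v k) hk' mulrA.
Qed.


Lemma cK1 : (1 : R) \in Kl. Proof. by apply/hKl => c _; rewrite mul1r mulr1. Qed.
Lemma cKD x y : x \in Kl -> y \in Kl -> x + y \in Kl.
Proof. by move=> /hKl hx /hKl hy; apply/hKl => c hc; rewrite mulrDl mulrDr hx ?hy. Qed.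
Lemma cKN x : x \in Kl -> - x \in Kl.
Proof. by move=> /hKl hx; apply/hKl => c hc; rewrite mulNr mulrN hx. Qed.
Lemma cKa : a \in Kl. Proof. by apply/hKl => c /esym. Qed.

Lemma conjn k i : k \in Kl -> v ^+ i * k * (v^-1) ^+ i \in Kl.
Proof.
move=> hk; elim: i => [|i IH]; first by rewrite !expr0 mul1r mulr1.
have -> : v ^+ i.+1 * k * (v^-1) ^+ i.+1 = v * (v ^+ i * k * (v^-1) ^+ i) * v^-1.
  by rewrite exprS exprSr !mulrA.
exact: conj1.
Qed.

Lemma finite_order : exists r, (0 < r)%N /\ v ^+ r = 1.
Proof.
pose L := mkseq (fun i => v ^+ i) N.+1.
have nuL : ~~ uniq L.
  apply/negP => uL; suff : (size L <= N)%N by rewrite size_mkseq ltnn.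
  apply: hN => //.
  move=> x y /mapP [i _ ->] /mapP [j _ ->].
  by rewrite -!exprD addnC.
have [i [j [hij hj heq]]] := uniqPn 0 nuL.
move: heq; rewrite size_mkseq in hj; rewrite !nth_mkseq //; last exact: ltn_trans hij hj.
move=> heq; exists (j - i)%N; split; first by rewrite subn_gt0.
have ui : v ^+ i \is a GRing.unit by rewrite unitrX // uv.
apply: (mulrI ui); rewrite mulr1 -exprD subnKC //; exact: ltnW.
Qed.

Section WithR.
Variable r : nat.
Hypothesis hr : (0 < r)%N.
Hypothesis hvr : v ^+ r = 1.

Definition gS (f : {ffun 'I_r -> seq_sub Kl}) : R := \sum_(j < r) ssval (f j) * v ^+ j.
Definition Sl := [seq gS f | f <- enum {ffun 'I_r -> seq_sub Kl}].

Lemma inSl f : gS f \in Sl. Proof. by apply: map_f; rewrite mem_enum. Qed.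
Lemma SlP x : x \in Sl -> exists f, x = gS f. Proof. by case/mapP => f _ ->; exists f. Qed.

Lemma vpow n : v ^+ n = v ^+ (n %% r).
Proof. by rewrite {1}(divn_eq n r) exprD mulnC exprM hvr expr1n mul1r. Qed.

Lemma mono k n : k \in Kl -> k * v ^+ n \in Sl.
Proof.
move=> hk; pose j0 := Ordinal (ltn_pmod n hr).
pose f := [ffun j : 'I_r => if j == j0 then SeqSub hk else SeqSub cK0].
suff -> : k * v ^+ n = gS f by apply: inSl.
rewrite /gS (bigD1 j0) //= ffunE eqxx /= big1 ?addr0; first by rewrite vpow.
by move=> j hj; rewrite ffunE (negPf hj) /= mul0r.
Qed.

Lemma SlD x y : x \in Sl -> y \in Sl -> x + y \in Sl.
Proof.
move=> /SlP [f1 ->] /SlP [f2 ->].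
pose f := [ffun j => SeqSub (cKD (ssvalP (f1 j)) (ssvalP (f2 j)))].
suff -> : gS f1 + gS f2 = gS f by apply: inSl.
by rewrite /gS -big_split /=; apply: eq_bigr => j _; rewrite ffunE /= mulrDl.
Qed.

Lemma SlN x : x \in Sl -> - x \in Sl.
Proof.
move=> /SlP [f1 ->].
pose f := [ffun j => SeqSub (cKN (ssvalP (f1 j)))].
suff -> : - gS f1 = gS f by apply: inSl.
by rewrite /gS -sumrN; apply: eq_bigr => j _; rewrite ffunE /= mulNr.
Qed.

Lemma Sl0 : (0 : R) \in Sl.
Proof. by have := mono 0 cK0; rewrite mul0r. Qed.

Lemma Sl1 : (1 : R) \in Sl.
Proof. by have := mono 0 cK1; rewrite mul1r expr0. Qed.

Lemma SlB x y : x \in Sl -> y \in Sl -> x - y \in Sl.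
Proof. by move=> hx hy; apply: SlD => //; apply: SlN. Qed.

Lemma Slsum (I : finType) (Fs : I -> R) : (forall i, Fs i \in Sl) -> \sum_i Fs i \in Sl.
Proof.
move=> h; apply: (big_ind (fun x => x \in Sl)); [exact: Sl0 | exact: SlD | move=> i _; exact: h].
Qed.

Lemma SlM x y : x \in Sl -> y \in Sl -> x * y \in Sl.
Proof.
move=> /SlP [f1 ->] /SlP [f2 ->].
rewrite /gS mulr_suml; apply: Slsum => i; rewrite mulr_sumr; apply: Slsum => j.
have ui : v ^+ i \is a GRing.unit by rewrite unitrX // uv.
set k := ssval (f1 i); set l := ssval (f2 j).
have hc : v ^+ i * l * (v^-1) ^+ i \in Kl by apply: conjn; apply: ssvalP.
have -> : k * v ^+ i * (l * v ^+ j) = (k * (v ^+ i * l * (v^-1) ^+ i)) * v ^+ (i + j).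
  by rewrite exprD exprVn !mulrA mulrVK.
by apply: mono; apply: cKM => //; apply: ssvalP.
Qed.

Lemma cross_false : False.
Proof.
have ha : a \in Sl by have := mono 0 cKa; rewrite expr0 mulr1.
have hvS : v \in Sl by have := mono 1 cK1; rewrite expr1 mul1r.
have hc := ft_comm hdiv Sl1 SlB SlM ha hvS.
have : a = m by rewrite -(mulrK uv a) hc hva mulrK ?uv.
by move/eqP; rewrite eq_sym (negPf hma).
Qed.

End WithR.

Lemma cross_contra : False.
Proof. by have [r [hr hvr]] := finite_order; apply: (cross_false hr hvr). Qed.

End Cross.


Section Main.
Variables (F : fieldType) (R : unitAlgType F).
Hypothesis hdiv : forall x : R, x != 0 -> x \is a GRing.unit.
Variable p : {poly F}.
Hypothesis hp : (1 < size p)%N.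
Definition PA (x : R) := horner_alg x p.
Hypothesis Hc : forall x y : R, PA x * y = y * PA x.
Hypothesis hnc : exists a b : R, a * b != b * a.

Definition central (z : R) := forall y, z * y = y * z.

Lemma PA_sum x : PA x = \sum_(i < size p) p`_i *: x ^+ i.
Proof.
rewrite /PA /horner_alg /horner_morph horner_coef size_map_poly.
by apply: eq_bigr => i _; rewrite coef_map /= mulr_algl.
Qed.


Section CaseA.
Variable zs : seq R.
Hypothesis uzs : uniq zs.
Hypothesis czs : forall z, z \in zs -> central z.

Lemma zs_comm x y : x \in zs -> y \in zs -> x * y = y * x.
Proof. by move=> hx _; apply: czs. Qed.

Hypothesis szs : (size p <= size zs)%N.

Lemma stepA (x y : R) : x ^+ (size p).-1 * y = y * x ^+ (size p).-1.
Proof.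
pose Q := \poly_(i < size p) (p`_i *: (x ^+ i * y - y * x ^+ i)).
have hQ : Q = 0.
  apply: (poly_roots_zero hdiv uzs zs_comm).
    by apply: leq_trans szs; apply: size_poly.
  move=> z hz; rewrite horner_poly.
  have := Hc (z * x) y; rewrite !PA_sum big_distrl big_distrr /= => /eqP.
  rewrite -subr_eq0 -sumrB => /eqP h; rewrite -[in RHS]h.
  apply: eq_bigr => i _.
  have hz' : forall w, z ^+ i * w = w * z ^+ i.
    by move=> w; apply/esym/commrX; rewrite /GRing.comm (czs hz).
  rewrite exprMn_comm; last by rewrite /GRing.comm (czs hz).
  rewrite -!scalerAl -scalerAr -scalerBr; congr (_ *: _).
  have e1 : x ^+ i * y * z ^+ i = z ^+ i * x ^+ i * y by rewrite -hz' mulrA.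
  have e2 : y * x ^+ i * z ^+ i = y * (z ^+ i * x ^+ i) by rewrite -mulrA -hz'.
  by rewrite mulrBl e1 e2.
have := congr1 (fun q : {poly R} => q`_(size p).-1) hQ.
rewrite coef0 coef_poly prednK ?leqnn /=; last by apply: ltnW.
move=> /eqP; rewrite scaler_eq0 => /orP[|/eqP]; last by move/eqP; rewrite subr_eq0 => /eqP.
have : lead_coef p != 0 by rewrite lead_coef_eq0 -size_poly_gt0; apply: ltnW.
by rewrite /lead_coef => /negPf ->.
Qed.

Lemma stepB1 (m : nat) : (m < size zs)%N -> (forall x y : R, x ^+ m * y = y * x ^+ m) ->
  forall j, (j <= m)%N -> 'C(m, j)%:R != 0 :> R ->
  forall x y : R, x ^+ (m - j) * y = y * x ^+ (m - j).
Proof.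
move=> hm hcm j hj hbin x y.
pose Q := \poly_(i < m.+1) ((x ^+ (m - i) * y - y * x ^+ (m - i)) *+ 'C(m, i)).
have hQ : Q = 0.
  apply: (poly_roots_zero hdiv uzs zs_comm); first by apply: leq_trans (size_poly _ _) _.
  move=> z hz; rewrite horner_poly.
  have := hcm (x + z) y; rewrite exprDn_comm; last by rewrite /GRing.comm (czs hz).
  rewrite big_distrl big_distrr /= => /eqP.
  rewrite -subr_eq0 -sumrB => /eqP h; rewrite -[in RHS]h.
  apply: eq_bigr => i _.
  have hz' : forall w, z ^+ i * w = w * z ^+ i.
    by move=> w; apply/esym/commrX; rewrite /GRing.comm (czs hz).
  rewrite !mulrnAl mulrnAr -mulrnBl; congr (_ *+ _).
  by rewrite mulrBl -!mulrA hz' -hz' mulrA.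
have := congr1 (fun q : {poly R} => q`_j) hQ.
rewrite coef0 coef_poly ltnS hj -mulr_natr => /(congr1 (fun w => w * ('C(m, j)%:R)^-1)).
by rewrite mul0r -mulrA mulrV ?hdiv // mulr1 => /eqP; rewrite subr_eq0 => /eqP.
Qed.

Lemma stepB (m : nat) : (0 < m)%N -> (m < size zs)%N ->
  (forall x y : R, x ^+ m * y = y * x ^+ m) ->
  exists m', [/\ (0 < m')%N, (forall j, (0 < j < m')%N -> 'C(m', j)%:R = 0 :> R)
     & forall x y : R, x ^+ m' * y = y * x ^+ m'].
Proof.
elim/ltn_ind: m => m IH hm0 hm hcm.
case: (classic (forall j, (0 < j < m)%N -> 'C(m, j)%:R = 0 :> R)) => [hall|].
  by exists m.
move=> hn; have [j hj] := not_all_ex_not _ _ hn; have [hj1 hj2] := imply_to_and _ _ hj.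
have hj' : (0 < j < m)%N by [].
apply: (IH (m - j)%N); first lia.
- lia.
- lia.
- by apply: stepB1 => //; [lia | apply/eqP].
Qed.

Lemma caseA_false : False.
Proof.
have hd : (0 < (size p).-1)%N by rewrite -ltnS (ltn_predK hp).
have hd2 : ((size p).-1 < size zs)%N by apply: leq_trans szs; rewrite (ltn_predK hp).
have [m' [h0 hb hcm]] := stepB hd hd2 stepA.
have comm := stepC hdiv h0 hb hcm.
have [a [b hab]] := hnc.
by rewrite comm eqxx in hab.
Qed.

End CaseA.
Section CaseB.
Variable zc : seq R.
Hypothesis uzc : uniq zc.
Hypothesis hzc : forall z, central z <-> z \in zc.
Hypothesis szc : (size zc < size p)%N.

Definition pR : {poly R} := map_poly (in_alg R) p.

Lemma PA_horner x : PA x = pR.[x]. Proof. by []. Qed.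

Lemma bound (L : seq R) : uniq L -> (forall x y, x \in L -> y \in L -> x * y = y * x) ->
  (size L <= (size p).-1 * size zc)%N.
Proof.
move=> uL cL.
have hin : forall x, x \in L -> PA x \in zc by move=> x _; apply/hzc => y; apply: Hc.
rewrite (count_partition uzc hin).
apply: (@leq_trans (\sum_(z <- zc) (size p).-1)%N); last first.
  by rewrite big_const_seq count_predT iter_addn_0.
apply: leq_sum => z _.
rewrite -size_filter.
set Lz := filter _ L.
have szp : size (pR - z%:P) = size p.
  rewrite size_polyDl /pR size_map_poly // size_polyN size_polyC.
  by apply: leq_ltn_trans hp; apply: leq_b1.
rewrite -ltnS (ltn_predK hp) -szp.
apply: max_ring_poly_roots.
- by rewrite -size_poly_gt0 szp; apply: ltnW.
- apply/allP => x; rewrite mem_filter => /andP[/eqP hx _].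
  by rewrite /root hornerD hornerN hornerC -PA_horner hx subrr.
- apply: uniq_roots_comm => //; first exact: filter_uniq.
  by move=> x y; rewrite !mem_filter => /andP[_ hx] /andP[_ hy]; apply: cL.
Qed.

Section Herstein.
Variables a b0 : R.
Hypothesis hab : a * b0 != b0 * a.

Definition kp (k : R) := forall c, c * a = a * c -> k * c = c * k.

Lemma kp_a : kp a. Proof. by move=> c /esym. Qed.
Lemma kp_1 : kp 1. Proof. by move=> c _; rewrite mul1r mulr1. Qed.
Lemma kp_B x y : kp x -> kp y -> kp (x - y).
Proof. by move=> hx hy c hc; rewrite mulrBl mulrBr hx ?hy. Qed.
Lemma kp_M x y : kp x -> kp y -> kp (x * y).
Proof. by move=> hx hy c hc; rewrite -mulrA hy // mulrA hx // mulrA. Qed.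
Lemma kp_comm x y : kp x -> kp y -> x * y = y * x.
Proof. by move=> hx hy; apply: hx; apply: hy. Qed.

Lemma Kl_exists : exists Kl : seq R, uniq Kl /\ (forall k, kp k <-> k \in Kl).
Proof.
apply: (finite_collect (B := ((size p).-1 * size zc)%N)) => s us hs.
by apply: bound => // x y hx hy; apply: kp_comm; apply: hs.
Qed.

Variable Kl : seq R.
Hypothesis uKl : uniq Kl.
Hypothesis hKl : forall k, kp k <-> k \in Kl.

Lemma K1 : (1 : R) \in Kl. Proof. by apply/hKl; apply: kp_1. Qed.
Lemma KB x y : x \in Kl -> y \in Kl -> x - y \in Kl.
Proof. by move=> /hKl hx /hKl hy; apply/hKl; apply: kp_B. Qed.
Lemma KM x y : x \in Kl -> y \in Kl -> x * y \in Kl.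
Proof. by move=> /hKl hx /hKl hy; apply/hKl; apply: kp_M. Qed.

Local Notation K := (KT hdiv K1 KB KM).

Lemma found_v : exists m v, [/\ m \in Kl, m != a, v != 0 & v * a = m * v].
Proof.
have ha : a \in Kl by apply/hKl; apply: kp_a.
pose aK : K := SeqSub ha.
have h1 := (@eigen R K (fun x : K => ssval x) (@val0 _ hdiv _ K1 KB KM) (@val1 _ hdiv _ K1 KB KM)
  (@valD _ hdiv _ K1 KB KM) (@valN _ hdiv _ K1 KB KM) (@valM _ hdiv _ K1 KB KM) aK b0).
have h2 : ssval aK * b0 != b0 * ssval aK by exact: hab.
case: (h1 h2) => mu hmu [v hv hva].
have hm : ssval mu \in Kl := ssvalP mu.
have hma : ssval mu != a.
  apply/negP => /eqP h; move/negP: hmu; apply; apply/eqP.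
  exact: (@val_inj _ _ (seq_sub Kl) mu aK h).
exists (ssval mu), v; split; [exact: hm | exact: hma | exact: hv | exact: hva].
Qed.


Lemma herstein_false : False.
Proof.
have [m [v [hm hma hv hva]]] := found_v.
exact: (@cross_contra R hdiv a Kl hKl m v hm hma hv hva _ bound).
Qed.

End Herstein.

Lemma caseB_false : False.
Proof.
have [a [b0 hab]] := hnc.
have [Kl [uKl hKl]] := Kl_exists a.
exact: (herstein_false hab hKl).
Qed.

End CaseB.
Lemma all_central_false : False.
Proof.
case: (classic (exists zs, [/\ uniq zs, (forall z, z \in zs -> central z) & (size p <= size zs)%N])).
  by case=> zs [uzs czs szs]; apply: (caseA_false uzs czs szs).
move=> hno.
have hbd : forall s : seq R, uniq s -> (forall z, z \in s -> central z) -> (size s <= (size p).-1)%N.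
  move=> s us cs; rewrite -ltnS (ltn_predK hp) ltnNge; apply/negP => hs.
  by apply: hno; exists s.
have [zc [uzc hzc]] := finite_collect hbd.
apply: (@caseB_false zc uzc hzc).
Qed.

End Main.

Lemma conj_expr (R : unitRingType) (y x : R) n : y \is a GRing.unit ->
  (y * x * y^-1) ^+ n = y * x ^+ n * y^-1.
Proof.
move=> uy; elim: n => [|n IH]; first by rewrite !expr0 mulr1 mulrV.
by rewrite exprS IH !mulrA mulrVK // -(mulrA y x) -exprS.
Qed.

Theorem theorem2p2_aux (F : fieldType) (R : unitAlgType F)
    (hdiv : forall x : R, x != 0 -> x \is a GRing.unit)
    (hnoncomm : exists a b : R, a * b != b * a)
    (p : {poly F}) (hp : (1 < size p)%N) :
  exists alpha beta : R, horner_alg (alpha * beta) p != horner_alg (beta * alpha) p.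
Proof.
apply: NNPP => hne.
have Hc : forall x y : R, PA p x * y = y * PA p x.
  move=> x y; case: (eqVneq y 0) => [->|hy]; first by rewrite mulr0 mul0r.
  have uy := hdiv _ hy.
  have e : horner_alg x p = horner_alg (y * x * y^-1) p.
    case: (eqVneq (horner_alg x p) (horner_alg (y * x * y^-1) p)) => // hn.
    exfalso; apply: hne; exists (x * y^-1), y.
    by rewrite mulrVK // mulrA.
  have e2 : PA p (y * x * y^-1) = y * PA p x * y^-1.
    rewrite !PA_sum mulr_sumr mulr_suml; apply: eq_bigr => i _.
    by rewrite conj_expr // -scalerAr -scalerAl.
  have e3 : PA p x = y * PA p x * y^-1 by rewrite -e2 /PA -e.
  by rewrite {1}e3 mulrVK.
exact: (all_central_false hdiv hp Hc hnoncomm).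
Qed.

Unset Implicit Arguments.

Theorem theorem2p2 (F : fieldType) (R : unitAlgType F)
    (hdiv : division_algebra R)
    (hnoncomm : exists a b : R, a * b != b * a)
    (p : {poly F}) (hp : (1 < size p)%N) :
  exists alpha beta : R, horner_alg (alpha * beta) p != horner_alg (beta * alpha) p.
Proof.
exact: (@theorem2p2_aux F R hdiv hnoncomm p hp).
Qed.
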